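(* Let $H$ be a separable complex Hilbert space, let $\{v_j\}_{j\in\mathbb N}$ be an orthonormal basis of $H$, let $\{w_j\}_{j\in\mathbb N}$ be a set of unit vectors in $H$, and fix $N\ge 1$. Let $\mathcal B_N=\{w_j\}_{1\le j\le N}\cup\{v_j\}_{j\ge N+1}$, let $H_N'=\operatorname{span}\{v_1,\dots,v_N\}$, and let $p_N'$ denote the orthogonal projection of $H$ onto $H_N'$. Then the following are equivalent: (a) $\mathcal B_N$ is a frame of $H$; (b) the set $\{p_N'(w_1),\dots,p_N'(w_N)\}$ spans $H_N'$; (c) the set $\{p_N'(w_1),\dots,p_N'(w_N)\}$ is linearly independent; (d) $\mathcal B_N$ is a Riesz sequence in $H$; (e) $\mathcal B_N$ is a Riesz basis of $H$.
   Context: A sequence $\{u_j\}$ in $H$ is a frame if there are constants $0<A\le B<\infty$ with $A\|f\|^2\le\sum_j|\langle f,u_j\rangle|^2\le B\|f\|^2$ for all $f\in H$. It is a Riesz sequence if there are constants $0<A\le B<\infty$ with $A\sum_{j\in J}|a_j|^2\le\|\sum_{j\in J}a_ju_j\|^2\le B\sum_{j\in J}|a_j|^2$ for every finite set of coefficients $\{a_j\}_{j\in J}\subset\mathbb C$. A Riesz basis is a sequence that is both a frame and a Riesz sequence. *)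

(* Defs.v *)
From HB Require Import structures.
From mathcomp Require Import all_boot all_order all_algebra.
From mathcomp Require Import classical_sets reals constructive_ereal ereal
  topology normedtype sequences.
From mathcomp Require Import complex.
Set Implicit Arguments. Unset Strict Implicit. Unset Printing Implicit Defensive.
Import Order.TTheory GRing.Theory Num.Theory.
Local Open Scope ring_scope.

Section Hilbert.
Variable R : realType.
Variable H : lmodType R[i].
(* inner product: linear in the first argument, conjugate-linear in the second *)
Variable ip : H -> H -> R[i].

Definition hnorm (x : H) : R := Num.sqrt (complex.Re (ip x x)).

Record hilbert : Prop := Hilbert {
  ipDl : forall (a : R[i]) (x y z : H), ip (a *: x + y) z = a * ip x z + ip y z;
  ip_conj : forall x y : H, ip y x = conjc (ip x y);
  ip_ge0 : forall x : H, 0 <= complex.Re (ip x x);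
  ip_eq0 : forall x : H, ip x x = 0 -> x = 0;
  ip_complete : forall u : nat -> H,
    (forall e : R, 0 < e -> exists M, forall m n, (M <= m)%N -> (M <= n)%N ->
       hnorm (u m - u n) < e) ->
    exists l : H, forall e : R, 0 < e -> exists M, forall n, (M <= n)%N ->
       hnorm (u n - l) < e
}.

Definition separable : Prop :=
  exists d : nat -> H, forall (f : H) (e : R), 0 < e -> exists n, hnorm (f - d n) < e.

Definition orthonormal (v : nat -> H) : Prop :=
  forall i j, ip (v i) (v j) = (i == j)%:R.

Definition orthonormal_basis (v : nat -> H) : Prop :=
  orthonormal v /\ (forall f : H, (forall j, ip f (v j) = 0) -> f = 0).

Definition frame (u : nat -> H) : Prop :=
  exists A B : R, 0 < A /\ A <= B /\ forall f : H,
    ((A * hnorm f ^+ 2)%:E <= \sum_(j <oo) ((ComplexField.Normc.normc (ip f (u j)) ^+ 2)%:E)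
     <= (B * hnorm f ^+ 2)%:E)%E.

(* Riesz sequence: inequalities for every finite set J of indices (J given as
   a duplicate-free list) and every family of coefficients *)
Definition riesz_sequence (u : nat -> H) : Prop :=
  exists A B : R, 0 < A /\ A <= B /\ forall (J : seq nat) (a : nat -> R[i]),
    uniq J ->
    A * (\sum_(j <- J) ComplexField.Normc.normc (a j) ^+ 2) <= hnorm (\sum_(j <- J) a j *: u j) ^+ 2
    <= B * (\sum_(j <- J) ComplexField.Normc.normc (a j) ^+ 2).

Definition riesz_basis (u : nat -> H) : Prop := frame u /\ riesz_sequence u.

Definition spanN (v : nat -> H) (N : nat) : set H :=
  [set x | exists c : 'I_N -> R[i], x = \sum_(k < N) c k *: v k].

Definition is_orth_proj (S : set H) (p : H -> H) : Prop :=
  forall f : H, S (p f) /\ (forall g : H, S g -> ip (f - p f) g = 0).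

(* B_N = {w_j}_{j < N} ∪ {v_j}_{j >= N} (0-based indexing) *)
Definition BN (N : nat) (v w : nat -> H) : nat -> H :=
  fun j => if (j < N)%N then w j else v j.

End Hilbert.

(* Main.v *)
Require Import Defs.
From HB Require Import structures.
From mathcomp Require Import all_boot all_order all_algebra.
From mathcomp Require Import classical_sets reals constructive_ereal ereal
  topology normedtype sequences.
From mathcomp Require Import complex.
From mathcomp Require Import ring lra.
Import Order.TTheory GRing.Theory Num.Theory.
Local Open Scope ring_scope.

Lemma aux_low (R : realType) (a Tt W g2 f2 QN QM e : R) : a <= Tt -> Tt = W + g2 -> g2 = f2 - QN ->
  f2 - QM < e -> a <= W + (QM - QN) + e.
Proof. lra. Qed.

Lemma aux_up (R : realType) (P W QnN QN f2 n : R) : P <= W + (QnN - QN) -> W <= n * f2 ->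
  QnN <= f2 -> 0 <= QN -> P <= (n + 1) * f2.
Proof. nra. Qed.

Section Cplx.
Variable R : realType.
Local Notation nc := (@ComplexField.Normc.normc R).
Implicit Types z : R[i].

Lemma nc_ge0 z : 0 <= nc z.
Proof. by case: z => a b; rewrite /= sqrtr_ge0. Qed.

Lemma nc_sq z : nc z ^+ 2 = complex.Re z ^+ 2 + complex.Im z ^+ 2.
Proof. by case: z => a b /=; rewrite sqr_sqrtr // addr_ge0 // sqr_ge0. Qed.

Lemma nc_sqC z : (nc z ^+ 2)%:C%C = z * conjc z.
Proof. rewrite nc_sq; case: z => a b /=; apply/eqP; rewrite eq_complex /=; apply/andP; split; apply/eqP; ring. Qed.

Lemma nc_conj z : nc (conjc z) = nc z.
Proof. by case: z => a b /=; rewrite sqrrN. Qed.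

Lemma Re_le_nc z : complex.Re z <= nc z.
Proof.
case: z => a b /=; have [a0|a0] := leP a 0.
  by apply: le_trans a0 _; rewrite sqrtr_ge0.
rewrite -(@ler_pXn2r _ 2) //= ?nnegrE ?sqrtr_ge0 ?(ltW a0) // sqr_sqrtr ?addr_ge0 ?sqr_ge0 //.
by rewrite lerDl sqr_ge0.
Qed.

Lemma nc_real (x : R) : nc (x%:C)%C = `|x|.
Proof. by rewrite /= expr0n /= addr0 sqrtr_sqr. Qed.

Lemma nc_sum (I : Type) (r : seq I) (P : pred I) (F : I -> R[i]) :
  nc (\sum_(i <- r | P i) F i) <= \sum_(i <- r | P i) nc (F i).
Proof.
elim/big_rec2: _ => [|i y1 y2 _ h]; first by rewrite ComplexField.Normc.normc0.
exact: le_trans (le_normcD _ _) (lerD (lexx _) h).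
Qed.

Lemma nc_eq0 z : nc z = 0 -> z = 0.
Proof. exact: ComplexField.Normc.eq0_normc. Qed.
End Cplx.

Section Hil.
Variable R : realType.
Variable H : lmodType R[i].
Variable ip : H -> H -> R[i].
Hypothesis hH : hilbert ip.
Local Notation nc := (@ComplexField.Normc.normc R).
Local Notation nrm := (hnorm ip).
Local Notation cj := (@conjc R).

Lemma ip0l y : ip 0 y = 0.
Proof.
have := ipDl hH 1 0 0 y; rewrite scale1r addr0 mul1r => h.
by apply: (addrI (ip 0 y)); rewrite addr0 -h.
Qed.

Lemma ipZl a x y : ip (a *: x) y = a * ip x y.
Proof. by have := ipDl hH a x 0 y; rewrite addr0 ip0l addr0. Qed.

Lemma ipDl' x y z : ip (x + y) z = ip x z + ip y z.
Proof. by have := ipDl hH 1 x y z; rewrite scale1r mul1r. Qed.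

Lemma ipNl x y : ip (- x) y = - ip x y.
Proof. by rewrite -scaleN1r ipZl mulN1r. Qed.

Lemma ipBl x y z : ip (x - y) z = ip x z - ip y z.
Proof. by rewrite ipDl' ipNl. Qed.

Lemma ip_suml (I : Type) (r : seq I) (P : pred I) (F : I -> H) y :
  ip (\sum_(i <- r | P i) F i) y = \sum_(i <- r | P i) ip (F i) y.
Proof. by elim/big_rec2: _ => [|i a b _ <-]; rewrite ?ip0l ?ipDl'. Qed.

Lemma ipr x y : ip x y = cj (ip y x).
Proof. by rewrite (ip_conj hH). Qed.

Lemma ip0r y : ip y 0 = 0.
Proof. by rewrite ipr ip0l rmorph0. Qed.

Lemma ipZr a x y : ip x (a *: y) = cj a * ip x y.
Proof. by rewrite [LHS]ipr ipZl rmorphM /= -ipr. Qed.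

Lemma ipDr x y z : ip x (y + z) = ip x y + ip x z.
Proof. by rewrite [LHS]ipr ipDl' rmorphD /= -!ipr. Qed.

Lemma ipNr x y : ip x (- y) = - ip x y.
Proof. by rewrite [LHS]ipr ipNl rmorphN /= -ipr. Qed.

Lemma ipBr x y z : ip x (y - z) = ip x y - ip x z.
Proof. by rewrite ipDr ipNr. Qed.

Lemma ip_sumr (I : Type) (r : seq I) (P : pred I) (F : I -> H) y :
  ip y (\sum_(i <- r | P i) F i) = \sum_(i <- r | P i) ip y (F i).
Proof. by rewrite [LHS]ipr ip_suml rmorph_sum; apply: eq_bigr => i _ /=; rewrite -ipr. Qed.

Lemma nrm_ge0 x : 0 <= nrm x.
Proof. exact: sqrtr_ge0. Qed.

Lemma nrm_sq x : nrm x ^+ 2 = complex.Re (ip x x).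
Proof. by rewrite sqr_sqrtr // (ip_ge0 hH). Qed.

Lemma ipxx x : ip x x = ((nrm x ^+ 2)%:C)%C.
Proof.
rewrite nrm_sq; have := ip_conj hH x x.
case: (ip x x) => a b /= [] /eqP; rewrite -subr_eq0 opprK -mulr2n mulrn_eq0 /= => /eqP ->.
by [].
Qed.

Lemma nrm_eq0 x : nrm x = 0 -> x = 0.
Proof. by move=> h; apply: (ip_eq0 hH); rewrite ipxx h expr0n. Qed.

Lemma nrm0 : nrm 0 = 0.
Proof. by rewrite /hnorm ip0l sqrtr0. Qed.

Lemma nrmZ a x : nrm (a *: x) = nc a * nrm x.
Proof.
rewrite /hnorm ipZl ipZr mulrA -nc_sqC ipxx -rmorphM /= sqrtrM ?sqr_ge0 //.
by rewrite sqrtr_sqr ger0_norm ?nc_ge0 // sqrtr_sqr ger0_norm ?nrm_ge0.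
Qed.

Lemma nrmN x : nrm (- x) = nrm x.
Proof. by rewrite /hnorm ipNl ipNr opprK. Qed.

Lemma nrmB x y : nrm (x - y) = nrm (y - x).
Proof. by rewrite -nrmN opprB. Qed.

Lemma CS x y : nc (ip x y) <= nrm x * nrm y.
Proof.
have [y0|yn0] := eqVneq (nrm y) 0.
  by rewrite y0 mulr0 (nrm_eq0 _ y0) ip0r ComplexField.Normc.normc0.
set a := ip x y; set n := nrm y ^+ 2.
have n0 : 0 < n by rewrite exprn_gt0 // lt0r yn0 nrm_ge0.
pose z := (n%:C)%C *: x - a *: y.
have e : ip z z = (n%:C)%C * ((n%:C)%C * ((nrm x ^+ 2)%:C)%C - ((nc a ^+ 2)%:C)%C).
  rewrite /z !ipBl !ipBr !ipZl !ipZr -/a (ipr y x) -/a (ipxx y) -/n (ipxx x) conjc_real nc_sqC.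
  ring.
move: e; rewrite ipxx -!rmorphM -rmorphB => -[e _]; rewrite ?(mul0r, mulr0, subr0, addr0) in e.
have : 0 <= n * (n * nrm x ^+ 2 - nc a ^+ 2) by rewrite -e sqr_ge0.
rewrite pmulr_rge0 // subr_ge0 => h.
rewrite -(@ler_pXn2r _ 2) //= ?nnegrE ?nc_ge0 ?mulr_ge0 ?nrm_ge0 //.
by rewrite exprMn -/n mulrC.
Qed.

Lemma nrmD x y : nrm (x + y) <= nrm x + nrm y.
Proof.
rewrite -(@ler_pXn2r _ 2) //= ?nnegrE ?addr_ge0 ?nrm_ge0 //.
rewrite nrm_sq ipDl' !ipDr.
have -> : complex.Re (ip x x + ip x y + (ip y x + ip y y)) =
   nrm x ^+ 2 + nrm y ^+ 2 + 2 * complex.Re (ip x y).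
  rewrite (ipr y x) !raddfD /= !nrm_sq.
  case: (ip x y) => a b /=; ring.
rewrite sqrrD; have := le_trans (@Re_le_nc _ (ip x y)) (CS x y); rewrite mulr2n; lra.
Qed.

Lemma nrm_sum (I : Type) (r : seq I) (P : pred I) (F : I -> H) :
  nrm (\sum_(i <- r | P i) F i) <= \sum_(i <- r | P i) nrm (F i).
Proof.
elim/big_rec2: _ => [|i a b _ h]; first by rewrite nrm0.
exact: le_trans (nrmD _ _) (lerD (lexx _) h).
Qed.


Lemma delta_seq (r : seq nat) (P : pred nat) (F : nat -> R[i]) i : uniq r ->
  \sum_(j <- r | P j) F j * (i == j)%:R = if (i \in r) && P i then F i else 0.
Proof.
move=> ur; rewrite big_mkcond /=.
case ir: (i \in r) => /=.
  rewrite (bigD1_seq i) //= eqxx mulr1 big1 ?addr0 // => j ji.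
  by rewrite eq_sym (negPf ji) mulr0; case: (P j).
rewrite big1_seq // => j /andP[_ jr]; have -> : (i == j) = false.
  by apply/negP => /eqP ij; rewrite ij jr in ir.
by rewrite mulr0; case: (P j).
Qed.

Variable v : nat -> H.
Hypothesis hv : orthonormal_basis ip v.

Lemma ipvv i j : ip (v i) (v j) = (i == j)%:R.
Proof. exact: hv.1. Qed.

Lemma nrm_v j : nrm (v j) = 1.
Proof. by rewrite /hnorm ipvv eqxx /= sqrtr1. Qed.

Lemma ip_comb (r : seq nat) (P : pred nat) (a : nat -> R[i]) j : uniq r ->
  ip (\sum_(i <- r | P i) a i *: v i) (v j) = if (j \in r) && P j then a j else 0.
Proof.
move=> ur; rewrite ip_suml -(@delta_seq r P a j ur); apply: eq_bigr => i _.
by rewrite ipZl ipvv eq_sym.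
Qed.

Lemma ip_comb2 (r : seq nat) (P : pred nat) (a b : nat -> R[i]) : uniq r ->
  ip (\sum_(i <- r | P i) a i *: v i) (\sum_(i <- r | P i) b i *: v i) =
  \sum_(i <- r | P i) a i * cj (b i).
Proof.
move=> ur; rewrite ip_suml big_seq_cond [RHS]big_seq_cond; apply: eq_bigr => i /andP[ir Pi].
by rewrite ipZl ipr ip_comb // ir Pi.
Qed.

Lemma pyth (r : seq nat) (P : pred nat) (a : nat -> R[i]) : uniq r ->
  nrm (\sum_(i <- r | P i) a i *: v i) ^+ 2 = \sum_(i <- r | P i) nc (a i) ^+ 2.
Proof.
move=> ur; have := @ip_comb2 r P a a ur; rewrite ipxx.
under [X in _ = X]eq_bigr => i _ do rewrite -nc_sqC.
by rewrite -rmorph_sum => -[].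
Qed.

Definition cf f j := ip f (v j).
Definition sf f n := \sum_(0 <= j < n) cf f j *: v j.
Definition Qf f n := \sum_(0 <= j < n) nc (cf f j) ^+ 2.

Lemma Qf_ge0 f n : 0 <= Qf f n.
Proof. by apply: sumr_ge0 => j _; rewrite sqr_ge0. Qed.

Lemma bessel_id f n : nrm (f - sf f n) ^+ 2 = nrm f ^+ 2 - Qf f n.
Proof.
have e1 : ip f (sf f n) = ((Qf f n)%:C)%C.
  rewrite /sf /Qf ip_sumr rmorph_sum; apply: eq_bigr => j _.
  by rewrite /= ipZr nc_sqC mulrC.
have e2 : ip (sf f n) (sf f n) = ((Qf f n)%:C)%C.
  rewrite ip_comb2 ?iota_uniq // rmorph_sum; apply: eq_bigr => j _.
  by rewrite /= nc_sqC.
have : ip (f - sf f n) (f - sf f n) = (((nrm f ^+ 2) - Qf f n)%:C)%C.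
  by rewrite ipBl !ipBr e1 e2 (ipr (sf f n) f) e1 conjc_real ipxx rmorphB /=; ring.
by rewrite ipxx => -[].
Qed.

Lemma Qf_le f n : Qf f n <= nrm f ^+ 2.
Proof. by rewrite -subr_ge0 -bessel_id sqr_ge0. Qed.

Lemma Qf_mono f m n : (m <= n)%N -> Qf f m <= Qf f n.
Proof.
move=> mn; rewrite /Qf (big_cat_nat (leq0n m) mn) /= lerDl.
by apply: sumr_ge0 => j _; rewrite sqr_ge0.
Qed.

Lemma sf_diff f m n : (n <= m)%N -> nrm (sf f m - sf f n) ^+ 2 = Qf f m - Qf f n.
Proof.
move=> nm; have e : forall (G : zmodType) (a b : G), a + b - a = b by move=> G a b; rewrite addrAC subrr add0r.
rewrite /sf /Qf !(big_cat_nat (leq0n n) nm) /= !e.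
by rewrite pyth // iota_uniq.
Qed.

Lemma expansion f e : 0 < e -> exists M, nrm (f - sf f M) < e.
Proof.
move=> e0.
pose E := range (Qf f); have hs : has_sup E.
  split; first by exists (Qf f 0); exists 0.
  by exists (nrm f ^+ 2) => _ [n _ <-]; apply: Qf_le.
have cauchy : forall e : R, 0 < e -> exists M, forall m n, (M <= m)%N -> (M <= n)%N ->
       nrm (sf f m - sf f n) < e.
  move=> d d0; have [_ [n0 _ <-] hn0] := sup_adherent (mulr_gt0 d0 d0) hs.
  exists n0 => m n m0 n0'.
  wlog nm : m n m0 n0' / (n <= m)%N.
    move=> W; have [nm|mn] := leqP n m; first exact: W.
    by rewrite nrmB; apply: W => //; apply: ltnW.
  rewrite -(@ltr_pXn2r _ 2) //= ?nnegrE ?nrm_ge0 ?(ltW d0) // sf_diff //.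
  have := sup_upper_bound hs (ex_intro2 _ _ m I erefl : E (Qf f m)).
  have := @Qf_mono f _ _ n0'; rewrite expr2; lra.
have [l hl] := ip_complete hH cauchy.
have fl : f = l.
  apply/eqP; rewrite -subr_eq0; apply/eqP; apply: hv.2 => j.
  apply: nc_eq0; apply/eqP; rewrite eq_le nc_ge0 andbT; apply/ler_addgt0Pr => d d0.
  rewrite add0r; have [M hM] := hl d d0.
  have := hM (maxn M j.+1) (leq_maxl _ _).
  set n := maxn M j.+1.
  have -> : f - l = (f - sf f n) + (sf f n - l) by rewrite addrA subrK.
  rewrite ipDl' ipBl {1}/sf ip_comb ?iota_uniq // mem_iota /= add0n.
  rewrite subn0 andbT (leq_trans (ltnSn j) (leq_maxr _ _)) /= /cf subrr add0r => h.
  apply/ltW; apply: le_lt_trans (CS _ _) _; rewrite nrm_v mulr1.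
  exact: h.
have [M hM] := hl e e0; exists M; rewrite {1}fl nrmB; exact: hM M (leqnn M).
Qed.


Variable w : nat -> H.
Variable N : nat.
Variable p : H -> H.
Hypothesis hp : is_orth_proj ip (spanN v N) p.

Lemma ip_ordcomb (d : 'I_N -> R[i]) (i : 'I_N) :
  ip (\sum_(k < N) d k *: v k) (v i) = d i.
Proof.
rewrite ip_suml (bigD1 i) //= ipZl ipvv eqxx mulr1 big1 ?addr0 // => k ki.
have ki' : (k : nat) != i by [].
by rewrite ipZl ipvv (negPf ki') mulr0.
Qed.

Lemma ip_ordcomb_out (d : 'I_N -> R[i]) (j : nat) : (N <= j)%N ->
  ip (\sum_(k < N) d k *: v k) (v j) = 0.
Proof.
move=> Nj; rewrite ip_suml big1 // => k _; rewrite ipZl ipvv.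
have -> : (k == j :> nat) = false by apply/negP => /eqP kj; move: (ltn_ord k); rewrite kj ltnNge Nj.
by rewrite mulr0.
Qed.

Lemma coef_inj (d d' : 'I_N -> R[i]) :
  \sum_(k < N) d k *: v k = \sum_(k < N) d' k *: v k -> forall i, d i = d' i.
Proof. by move=> e i; rewrite -ip_ordcomb e ip_ordcomb. Qed.

Lemma span_coef x : spanN v N x -> x = \sum_(i < N) ip x (v i) *: v i.
Proof.
move=> [c ->]; apply: eq_bigr => i _; by rewrite ip_ordcomb.
Qed.

Lemma span_v (i : 'I_N) : spanN v N (v i).
Proof.
exists (fun k => (k == i)%:R); rewrite (bigD1 i) //= eqxx scale1r big1 ?addr0 // => k /negPf ->.
by rewrite scale0r.
Qed.

Lemma span_out x j : spanN v N x -> (N <= j)%N -> ip x (v j) = 0.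
Proof. by move=> [c ->]; apply: ip_ordcomb_out. Qed.

Lemma ip_p f (i : 'I_N) : ip (p f) (v i) = ip f (v i).
Proof.
have := (hp f).2 _ (span_v i); rewrite ipBl => /eqP; rewrite subr_eq0 => /eqP.
by move=> ->.
Qed.

Lemma ip_span_w x k : spanN v N x -> ip x (w k) = ip x (p (w k)).
Proof.
move=> sx; have := (hp (w k)).2 _ sx; rewrite ipr => /(congr1 cj); rewrite conjcK rmorph0.
by rewrite ipBr => /eqP; rewrite subr_eq0 => /eqP.
Qed.

Lemma p_sf f : p f = sf f N.
Proof.
rewrite (span_coef _ (hp f).1) /sf big_mkord; apply: eq_bigr => i _.
by rewrite ip_p.
Qed.

Definition Am : 'M[R[i]]_N := \matrix_(i, k) ip (p (w k)) (v i).

Lemma comb_pw (c : 'I_N -> R[i]) :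
  \sum_(k < N) c k *: p (w k) = \sum_(i < N) (\sum_(k < N) Am i k * c k) *: v i.
Proof.
under eq_bigr => k _ do rewrite (span_coef _ (hp (w k)).1) scaler_sumr.
rewrite exchange_big /=; apply: eq_bigr => i _; rewrite scaler_suml.
by apply: eq_bigr => k _; rewrite scalerA mxE mulrC.
Qed.

Lemma notunit_row : ~~ (Am \in unitmx) -> exists2 e : 'rV[R[i]]_N, e != 0 & e *m Am = 0.
Proof. by rewrite unitmxE unitfE negbK => /det0P. Qed.

Lemma notunit_col : ~~ (Am \in unitmx) -> exists2 e : 'cV[R[i]]_N, e != 0 & Am *m e = 0.
Proof.
rewrite -unitmx_tr unitmxE unitfE negbK => /det0P [e e0 he].
exists e^T; first by rewrite trmx_eq0.
by rewrite -[Am]trmxK -trmx_mul he trmx0.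
Qed.

Lemma unit_span : Am \in unitmx -> forall x : H, spanN v N x ->
          exists c : 'I_N -> R[i], x = \sum_(k < N) c k *: p (w k).
Proof.
move=> uA x sx; pose d : 'cV_N := \col_i ip x (v i).
exists (fun k => (invmx Am *m d) k 0); rewrite comb_pw (span_coef _ sx).
apply: eq_bigr => i _; congr (_ *: _).
have := congr1 (fun M : 'cV_N => M i 0) (mulKVmx uA d); rewrite !mxE => <-.
by apply: eq_bigr => k _; rewrite mxE.
Qed.

Lemma unit_indep : Am \in unitmx -> forall c : 'I_N -> R[i],
   \sum_(k < N) c k *: p (w k) = 0 -> forall k, c k = 0.
Proof.
move=> uA c; rewrite comb_pw => h k.
have h0 : \sum_(i < N) (\sum_(k < N) Am i k * c k) *: v i = \sum_(i < N) 0 *: v i.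
  by rewrite h big1 // => i _; rewrite scale0r.
pose u : 'cV_N := \col_k c k.
have Au : Am *m u = 0.
  apply/matrixP => i j; rewrite !mxE.
  transitivity (\sum_(k < N) Am i k * c k); last exact: coef_inj _ _ h0 i.
  by apply: eq_bigr => l _; rewrite /u !mxE.
have := congr1 (fun M : 'cV_N => M k 0) (mulKmx uA u); rewrite Au mulmx0 !mxE.
by move=> ->.
Qed.

Lemma span_unit : (forall x : H, spanN v N x ->
          exists c : 'I_N -> R[i], x = \sum_(k < N) c k *: p (w k)) -> Am \in unitmx.
Proof.
move=> hs.
have [C hC] : exists C : 'I_N -> 'I_N -> R[i], forall i : 'I_N, v i = \sum_(k < N) C i k *: p (w k).
  have [C hC] := @boolp.choice _ _ (fun (i : 'I_N) (c : 'I_N -> R[i]) => v i = \sum_(k < N) c k *: p (w k)) (fun i : 'I_N => hs (v i) (span_v i)).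
  by exists C.
pose Cm : 'M[R[i]]_N := \matrix_(a, b) C b a.
suff : Am *m Cm = 1%:M by case/mulmx1_unit.
apply/matrixP => i' i; rewrite !mxE.
have e : \sum_(i'' < N) (i'' == i)%:R *: v i'' = \sum_(i'' < N) (\sum_(k < N) Am i'' k * C i k) *: v i''.
  rewrite -comb_pw -hC (bigD1 i) //= eqxx scale1r big1 ?addr0 // => k /negPf ->.
  by rewrite scale0r.
rewrite (coef_inj _ _ e i'); apply: eq_bigr => k _; by rewrite [Cm _ _]mxE.
Qed.

Lemma indep_unit : (forall c : 'I_N -> R[i], \sum_(k < N) c k *: p (w k) = 0 ->
          forall k, c k = 0) -> Am \in unitmx.
Proof.
move=> hi; case uA: (Am \in unitmx) => //.
have [e e0 he] := notunit_col (negbT uA).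
suff : e = 0 by move=> e00; move: e0; rewrite e00 eqxx.
apply/matrixP => k j; rewrite ord1 mxE.
apply: (hi (fun k => e k 0)); rewrite comb_pw big1 // => i _.
have := congr1 (fun M : 'cV_N => M i 0) he; rewrite !mxE => ->.
by rewrite scale0r.
Qed.


Local Notation b := (BN N v w).

Lemma ip_b f j : ip f (b j) = if (j < N)%N then ip f (w j) else ip f (v j).
Proof. by rewrite /BN; case: (j < N)%N. Qed.

Lemma le_sqrt (x T : R) : 0 <= x -> x ^+ 2 <= T -> x <= Num.sqrt T.
Proof. by move=> x0 h; rewrite -(ger0_norm x0) -sqrtr_sqr ler_wsqrtr. Qed.

Lemma frame_unit : frame ip b -> Am \in unitmx.
Proof.
move=> [A0 [B [A0p [_ hF]]]]; case uA: (Am \in unitmx) => //.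
have [e e0 he] := notunit_row (negbT uA).
pose x := \sum_(i < N) cj (e 0 i) *: v i.
have sx : spanN v N x by exists (fun i => cj (e 0 i)).
have hx : forall j, ip x (b j) = 0.
  move=> j; rewrite ip_b; case: ltnP => jN; last exact: span_out.
  rewrite (ip_span_w _ _ sx) ip_suml.
  have h0 := congr1 (fun M : 'rV_N => cj (M 0 (Ordinal jN))) he; rewrite !mxE rmorph0 rmorph_sum /= in h0.
  rewrite -[RHS]h0.
  by apply: eq_bigr => i _; rewrite ipZl ipr mxE rmorphM.
have /andP[+ _] := hF x.
rewrite (_ : (\sum_(j <oo) _)%E = 0%E); last first.
  rewrite eseries0 // => j _ _; by rewrite hx ComplexField.Normc.normc0 expr0n.
rewrite lee_fin pmulr_rle0 // => hx0.
have x0 : x = 0.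
  apply: nrm_eq0; apply/eqP; rewrite -sqrf_eq0 eq_le hx0 sqr_ge0 //.
suff : e = 0 by move=> e00; move: e0; rewrite e00 eqxx.
apply/matrixP => i k; rewrite ord1 mxE.
have : \sum_(i < N) cj (e 0 i) *: v i = \sum_(i < N) 0 *: v i.
  by rewrite -/x x0 big1 // => l _; rewrite scale0r.
move/coef_inj => /(_ k) /(congr1 cj); by rewrite conjcK rmorph0.
Qed.


Lemma riesz_unit : riesz_sequence ip b -> Am \in unitmx.
Proof.
move=> [A0 [B [A0p [_ hR]]]]; case uA: (Am \in unitmx) => //.
have [e e0 he] := notunit_col (negbT uA).
have [k0 k0n] : exists k : 'I_N, e k 0 != 0.
  apply/existsP; apply: contraNT e0 => /existsPn h; apply/eqP/matrixP => k j.
  by rewrite ord1 mxE; apply/eqP/negbNE/h.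
pose c := fun k : 'I_N => e k 0.
pose gam := \sum_(k < N) nc (c k) ^+ 2.
have gam0 : 0 < gam.
  rewrite /gam (bigD1 k0) //=.
  have t0 : 0 < nc (c k0) ^+ 2.
    rewrite exprn_gt0 // lt0r nc_ge0 andbT; apply/negP => /eqP /nc_eq0 h.
    by move: k0n; rewrite -/(c k0) h eqxx.
  have s0 : 0 <= \sum_(i < N | i != k0) nc (c i) ^+ 2 by apply: sumr_ge0 => i _; apply: sqr_ge0.
  lra.
pose y := \sum_(k < N) c k *: w k.
have hpw : \sum_(k < N) c k *: p (w k) = 0.
  rewrite comb_pw big1 // => i _.
  have := congr1 (fun M : 'cV_N => M i 0) he; rewrite !mxE => ->; by rewrite scale0r.
have cy0 : forall j, (j < N)%N -> cf y j = 0.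
  move=> j jN; rewrite /cf (_ : v j = v (Ordinal jN)) //.
  transitivity (ip (\sum_(k < N) c k *: p (w k)) (v (Ordinal jN))); last by rewrite hpw ip0l.
  rewrite /y !ip_suml; apply: eq_bigr => k _; by rewrite !ipZl ip_p.
have sq0 : 0 < Num.sqrt (A0 * gam) by rewrite sqrtr_gt0 mulr_gt0.
have [M hM] := expansion y _ sq0.
pose M' := maxn M N.
have hE : nrm (y - sf y M') ^+ 2 < A0 * gam.
  have h2 : nrm (y - sf y M) ^+ 2 < A0 * gam.
    rewrite -[X in _ < X](@sqr_sqrtr _ (A0 * gam)) ?ltW ?mulr_gt0 //.
    by rewrite (@ltr_pXn2r _ 2) //= ?nnegrE ?nrm_ge0 ?sqrtr_ge0.
  move: h2; rewrite !bessel_id; have := @Qf_mono y _ _ (leq_maxl M N); lra.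
pose c' := fun j : nat => if insub j is Some k then c k else 0.
pose a := fun j : nat => if (j < N)%N then c' j else - cf y j.
have /andP[hl _] := hR (index_iota 0 M') a (iota_uniq _ _).
have ecomb : \sum_(j <- index_iota 0 M') a j *: b j = y - sf y M'.
  rewrite (big_cat_nat (leq0n N) (leq_maxr M N)) /=.
  congr (_ + _).
    rewrite big_mkord /y; apply: eq_bigr => k _.
    by rewrite /a /BN ltn_ord /c' valK.
  have -> : sf y M' = \sum_(N <= j < M') cf y j *: v j.
    rewrite /sf (big_cat_nat (leq0n N) (leq_maxr M N)) /= big_nat big1 ?add0r // => j /andP[_ jN].
    by rewrite cy0 // scale0r.
  rewrite -sumrN big_nat [RHS]big_nat; apply: eq_bigr => j /andP[Nj _].
  by rewrite /a /BN ltnNge Nj /= scaleNr.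
have esq : gam <= \sum_(j <- index_iota 0 M') nc (a j) ^+ 2.
  rewrite (big_cat_nat (leq0n N) (leq_maxr M N)) /=.
  have -> : \sum_(0 <= j < N) nc (a j) ^+ 2 = gam.
    rewrite big_mkord /gam; apply: eq_bigr => k _.
    by rewrite /a ltn_ord /c' valK.
  by rewrite lerDl; apply: sumr_ge0 => j _; apply: sqr_ge0.
rewrite ecomb in hl.
have := ler_pM2l A0p; move=> /(_ gam (\sum_(j <- index_iota 0 M') nc (a j) ^+ 2)); rewrite esq => /esym h.
lra.
Qed.


Hypothesis hw : forall j, nrm (w j) = 1.

Lemma sq_le (x y : R) : 0 <= x -> x <= y -> x ^+ 2 <= y ^+ 2.
Proof. by move=> x0 h; rewrite !expr2 ler_pM. Qed.

Lemma sum_J_lt (V : zmodType) (J : seq nat) (F : nat -> V) : uniq J ->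
  \sum_(j <- J | (j < N)%N) F j = \sum_(k < N) (if (k : nat) \in J then F k else 0).
Proof.
move=> uJ.
rewrite -(big_mkord xpredT (fun k => if k \in J then F k else 0)) -big_mkcond.
rewrite -[LHS]big_filter -[RHS]big_filter.
apply: perm_big; apply: uniq_perm; rewrite ?filter_uniq ?iota_uniq //.
by move=> j; rewrite !mem_filter mem_iota /= subn0 add0n andbC.
Qed.

Lemma unit_riesz : Am \in unitmx -> riesz_sequence ip b.
Proof.
move=> uA; pose Ci := invmx Am.
pose L := fun k : 'I_N => \sum_(i < N) nc (Ci k i).
have L0 : forall k, 0 <= L k by move=> k; apply: sumr_ge0 => i _; apply: nc_ge0.
pose K := 1 + \sum_(k < N) L k ^+ 2 + (1 + \sum_(k < N) L k) ^+ 2.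
have sL0 : 0 <= \sum_(k < N) L k by apply: sumr_ge0.
have sL20 : 0 <= \sum_(k < N) L k ^+ 2 by apply: sumr_ge0 => k _; apply: sqr_ge0.
have K1 : 1 <= K by rewrite /K; have := sqr_ge0 (1 + \sum_(k < N) L k); lra.
have K0 : 0 < K by lra.
exists K^-1, ((N%:R + 1) ^+ 2); split; first by rewrite invr_gt0.
split.
  apply: le_trans (_ : 1 <= _); first by rewrite invf_le1.
  have := ler0n R N; nra.
move=> J a uJ.
set S := \sum_(j <- J) nc (a j) ^+ 2.
set y := \sum_(j <- J) a j *: b j.
pose a' := fun k : 'I_N => if (k : nat) \in J then a k else 0.
pose y1 := \sum_(k < N) a' k *: w k.
pose z := \sum_(j <- J | ~~ (j < N)%N) a j *: v j.
have yz : y = y1 + z.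
  rewrite /y (bigID (fun j => (j < N)%N)) /=; congr (_ + _).
    rewrite sum_J_lt // /y1; apply: eq_bigr => k _; rewrite /a' /BN ltn_ord.
    by case: ifP => _; rewrite ?scale0r.
  by apply: eq_bigr => j /negbTE jN; rewrite /BN jN.
have Ssplit : S = \sum_(k < N) nc (a' k) ^+ 2 + nrm z ^+ 2.
  rewrite /S (bigID (fun j => (j < N)%N)) /= sum_J_lt // pyth //; congr (_ + _).
  apply: eq_bigr => k _; rewrite /a'; case: ifP => _ //.
  by rewrite ComplexField.Normc.normc0 expr0n.
have hb : forall i : 'I_N, ip y (v i) = \sum_(k < N) Am i k * a' k.
  move=> i; rewrite yz ipDl' /z ip_comb // ltn_ord andbF addr0 /y1 ip_suml.
  by apply: eq_bigr => k _; rewrite ipZl -ip_p mxE mulrC.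
have ha' : forall k, nc (a' k) <= L k * nrm y.
  move=> k; have -> : a' k = \sum_(i < N) Ci k i * ip y (v i).
    transitivity ((invmx Am *m (Am *m \col_l a' l)) k 0); first by rewrite mulKmx // mxE.
    rewrite mxE; apply: eq_bigr => i _; rewrite hb mxE; congr (_ * _).
    by apply: eq_bigr => l _; rewrite [(\col_l _) _ _]mxE.
  apply: le_trans (nc_sum _ _ _ _ _) _; rewrite /L mulr_suml; apply: ler_sum => i _.
  rewrite ComplexField.Normc.normcM ler_wpM2l ?nc_ge0 //.
  by apply: le_trans (CS _ _) _; rewrite nrm_v mulr1.
have hy1 : nrm y1 <= \sum_(k < N) nc (a' k).
  apply: le_trans (nrm_sum _ _ _ _) _; apply: ler_sum => k _.
  by rewrite nrmZ hw mulr1.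
have hz : nrm z <= nrm y * (1 + \sum_(k < N) L k).
  have -> : z = y - y1 by rewrite yz addrC addKr.
  apply: le_trans (nrmD _ _) _; rewrite nrmN mulrDr mulr1 lerD2l.
  apply: le_trans hy1 _; rewrite mulr_sumr; apply: ler_sum => k _.
  by rewrite mulrC.
have ny0 := nrm_ge0 y.
apply/andP; split.
  rewrite mulrC -[X in X <= _]/(S / K) ler_pdivrMr // Ssplit.
  have h1 : \sum_(k < N) nc (a' k) ^+ 2 <= nrm y ^+ 2 * \sum_(k < N) L k ^+ 2.
    rewrite mulr_sumr; apply: ler_sum => k _; rewrite -exprMn mulrC.
    by apply: sq_le; [apply: nc_ge0 | apply: ha'].
  have h2 : nrm z ^+ 2 <= nrm y ^+ 2 * (1 + \sum_(k < N) L k) ^+ 2.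
    by rewrite -exprMn; apply: sq_le; [apply: nrm_ge0 | apply: hz].
  rewrite /K; have := sqr_ge0 (nrm y); nra.
have S0 : 0 <= S by apply: sumr_ge0 => j _; apply: sqr_ge0.
have hsa : forall k, nc (a' k) <= Num.sqrt S.
  move=> k; apply: le_sqrt; first exact: nc_ge0.
  rewrite Ssplit (bigD1 k) //= -addrA lerDl addr_ge0 ?sqr_ge0 //.
  by apply: sumr_ge0 => l _; apply: sqr_ge0.
have hsz : nrm z <= Num.sqrt S.
  apply: le_sqrt; first exact: nrm_ge0.
  by rewrite Ssplit lerDr; apply: sumr_ge0 => l _; apply: sqr_ge0.
have hy : nrm y <= (N%:R + 1) * Num.sqrt S.
  rewrite yz; apply: le_trans (nrmD _ _) _; rewrite mulrDl mul1r lerD //.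
  apply: le_trans hy1 _; apply: le_trans (ler_sum _ (fun k _ => hsa k)) _.
  by rewrite sumr_const card_ord mulr_natl.
rewrite -[X in _ <= _ * X](@sqr_sqrtr _ S) // -exprMn.
by apply: sq_le.
Qed.


Lemma partial_eq f n : (N <= n)%N ->
  \sum_(0 <= j < n) nc (ip f (b j)) ^+ 2 =
  \sum_(k < N) nc (ip f (w k)) ^+ 2 + (Qf f n - Qf f N).
Proof.
move=> Nn; rewrite (big_cat_nat (leq0n N) Nn) /=; congr (_ + _).
  by rewrite big_mkord; apply: eq_bigr => k _; rewrite ip_b ltn_ord.
rewrite /Qf (big_cat_nat (leq0n N) Nn) /= addrAC subrr add0r big_nat [RHS]big_nat.
by apply: eq_bigr => j /andP[Nj _]; rewrite ip_b ltnNge Nj.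
Qed.

Lemma unit_frame : Am \in unitmx -> frame ip b.
Proof.
move=> uA; pose Ci := invmx Am.
have vC : forall i : 'I_N, v i = \sum_(k < N) Ci k i *: p (w k).
  move=> i; rewrite comb_pw.
  have hM := mulmxV uA.
  have co : forall i' : 'I_N, \sum_(k < N) Am i' k * Ci k i = (i' == i)%:R.
    move=> i'; have := congr1 (fun M : 'M_N => M i' i) hM; rewrite !mxE => <-.
    by apply: eq_bigr.
  under eq_bigr => i' _ do rewrite co.
  rewrite (bigD1 i) //= eqxx scale1r big1 ?addr0 // => i' /negPf ->.
  by rewrite scale0r.
pose r := fun k : 'I_N => w k - p (w k).
pose L := fun i : 'I_N => \sum_(k < N) nc (Ci k i) * (1 + nrm (r k)).
have L0 : forall i, 0 <= L i.
  move=> i; apply: sumr_ge0 => k _; apply: mulr_ge0; first exact: nc_ge0.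
  by have := nrm_ge0 (r k); lra.
pose K := 1 + \sum_(i < N) L i ^+ 2.
have sL20 : 0 <= \sum_(i < N) L i ^+ 2 by apply: sumr_ge0 => k _; apply: sqr_ge0.
have K0 : 0 < K by rewrite /K; lra.
exists K^-1, (N%:R + 1); split; first by rewrite invr_gt0.
split.
  apply: le_trans (_ : 1 <= _); first by rewrite invf_le1 // /K; lra.
  by rewrite lerDr.
move=> f.
pose g := f - p f.
pose W := \sum_(k < N) nc (ip f (w k)) ^+ 2.
have W0 : 0 <= W by apply: sumr_ge0 => k _; apply: sqr_ge0.
have EN : nrm g ^+ 2 = nrm f ^+ 2 - Qf f N by rewrite /g p_sf bessel_id.
pose T := W + nrm g ^+ 2.
have hwt : forall k : 'I_N, nc (ip f (w k)) <= Num.sqrt T.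
  move=> k; apply: le_sqrt; first exact: nc_ge0.
  apply: le_trans (_ : W <= T); last by rewrite /T lerDl sqr_ge0.
  rewrite /W (bigD1 k) //= lerDl; apply: sumr_ge0 => l _; apply: sqr_ge0.
have hgt : nrm g <= Num.sqrt T.
  by apply: le_sqrt; [apply: nrm_ge0 | rewrite /T lerDr].
have hpw : forall k : 'I_N, ip f (p (w k)) = ip f (w k) - ip g (r k).
  move=> k; have h1 : ip (p f) (r k) = 0.
    by rewrite ipr (hp (w k)).2 ?rmorph0 //; exact: (hp f).1.
  by rewrite /g ipBl h1 subr0 /r ipBr opprB addrC subrK.
have hc : forall i : 'I_N, nc (ip f (v i)) <= L i * Num.sqrt T.
  move=> i; rewrite [X in ip f X]vC ip_sumr.
  apply: le_trans (nc_sum _ _ _ _ _) _; rewrite /L mulr_suml; apply: ler_sum => k _.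
  rewrite ipZr ComplexField.Normc.normcM nc_conj -mulrA ler_wpM2l ?nc_ge0 //.
  rewrite hpw; apply: le_trans (le_normcD _ _) _; rewrite normcN.
  rewrite mulrDl mul1r; apply: lerD; first exact: hwt.
  apply: le_trans (CS _ _) _; rewrite [X in _ <= X]mulrC; apply: ler_wpM2r; first exact: nrm_ge0.
  exact: hgt.
have hfK : nrm f ^+ 2 <= K * T.
  have hQ : Qf f N <= T * \sum_(i < N) L i ^+ 2.
    rewrite /Qf big_mkord mulr_sumr; apply: ler_sum => i _.
    have -> : T * L i ^+ 2 = (L i * Num.sqrt T) ^+ 2.
      have T0 : 0 <= T by rewrite /T addr_ge0 ?sqr_ge0.
      by rewrite exprMn (sqr_sqrtr T0) mulrC.
    by apply: sq_le; [apply: nc_ge0 | apply: hc].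
  have Tg : nrm g ^+ 2 <= T by rewrite /T lerDr.
  rewrite /K mulrDl mul1r [_ * T]mulrC.
  have -> : nrm f ^+ 2 = nrm g ^+ 2 + Qf f N by rewrite EN subrK.
  by apply: lerD.
pose F := fun j => (nc (ip f (b j)) ^+ 2)%:E.
have F0 : forall j, (0 <= F j)%E by move=> j; rewrite lee_fin sqr_ge0.
apply/andP; split.
  apply/lee_addgt0Pr => eps eps0.
  have se : 0 < Num.sqrt eps by rewrite sqrtr_gt0.
  have [M0 hM0] := expansion f _ se.
  pose M := maxn M0 N.
  have hEM : nrm f ^+ 2 - Qf f M < eps.
    have h2 : nrm (f - sf f M0) ^+ 2 < eps.
      by rewrite -(sqr_sqrtr (ltW eps0)) (@ltr_pXn2r _ 2) //= ?nnegrE ?nrm_ge0 ?sqrtr_ge0.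
    rewrite bessel_id in h2; apply: le_lt_trans h2; rewrite lerD2l lerN2.
    exact: Qf_mono (leq_maxl M0 N).
  have hP := @partial_eq f _ (leq_maxr M0 N).
  have hPS : ((\sum_(0 <= j < M) nc (ip f (b j)) ^+ 2)%:E <= \sum_(j <oo) F j)%E.
    rewrite -sumEFin; apply: nneseries_lim_ge => n _ _; exact: F0.
  apply: le_trans (leeD2r (eps%:E) hPS); rewrite -EFinD lee_fin hP.
  have h3 : K^-1 * nrm f ^+ 2 <= T by rewrite ler_pdivrMl.
  exact: aux_low h3 erefl EN hEM.
apply: lime_le; first by apply: is_cvg_nneseries => n _ _; exact: F0.
apply: nearW => n.
rewrite sumEFin lee_fin.
have hle : \sum_(0 <= j < n) nc (ip f (b j)) ^+ 2 <= \sum_(0 <= j < n + N) nc (ip f (b j)) ^+ 2.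
  rewrite (big_cat_nat (leq0n n) (leq_addr N n)) /= lerDl.
  by apply: sumr_ge0 => j _; apply: sqr_ge0.
rewrite (@partial_eq f _ (leq_addl n N)) in hle.
have hW : W <= N%:R * nrm f ^+ 2.
  have hk : forall k : 'I_N, nc (ip f (w k)) ^+ 2 <= nrm f ^+ 2.
    by move=> k; apply: sq_le; [apply: nc_ge0 | apply: le_trans (CS _ _) _; rewrite hw mulr1].
  apply: le_trans (ler_sum _ (fun k _ => hk k)) _.
  by rewrite sumr_const card_ord mulr_natl.
exact: aux_up hle hW (Qf_le _ _) (Qf_ge0 _ _).
Qed.


Lemma main_tfae :
  [<-> frame ip (BN N v w);
       (forall x : H, spanN v N x ->
          exists c : 'I_N -> R[i], x = \sum_(k < N) c k *: p (w k));
       (forall c : 'I_N -> R[i], \sum_(k < N) c k *: p (w k) = 0 ->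
          forall k, c k = 0);
       riesz_sequence ip (BN N v w);
       riesz_basis ip (BN N v w)].
Proof.
tfae => [h|h|h|h|[h _]].
- exact: unit_span (frame_unit h).
- exact: unit_indep (span_unit h).
- exact: unit_riesz (indep_unit h).
- by split; [exact: unit_frame (riesz_unit h) | exact: h].
- exact: h.
Qed.

End Hil.

Theorem mainTheorem1 (R : realType) (H : lmodType R[i]) (ip : H -> H -> R[i])
  (hH : hilbert ip) (sepH : separable ip)
  (v w : nat -> H) (hv : orthonormal_basis ip v)
  (hw : forall j, hnorm ip (w j) = 1)
  (N : nat) (hN : (1 <= N)%N)
  (p : H -> H) (hp : is_orth_proj ip (spanN v N) p) :
  [<-> frame ip (BN N v w);
       (forall x : H, spanN v N x ->
          exists c : 'I_N -> R[i], x = \sum_(k < N) c k *: p (w k));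
       (forall c : 'I_N -> R[i], \sum_(k < N) c k *: p (w k) = 0 ->
          forall k, c k = 0);
       riesz_sequence ip (BN N v w);
       riesz_basis ip (BN N v w)].
Proof. by apply: main_tfae. Qed.
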